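(* Let $M$ be a compact Polish metric space, let $\bar a=(a_0,\dots,a_{p-1})$ and $\bar b=(b_0,\dots,b_{p-1})$ be tuples from $M$, and let $(A_n:n\in\omega)$ be a sequence of finite subsets of $M$ with $A_n\subseteq A_{n+1}$ and $\bigcup_{z\in A_n}B_{2^{-n}}(z)=M$ for all $n$. If $\mathrm{SR}(\bar a,\bar b)>\omega$, then there is a compact approximation system for $M,\bar a,\bar b$ with respect to $(A_n:n\in\omega)$.
   Context: $B_r(z)$ denotes the open ball of radius $r$ about $z$. $M$ is viewed as a structure in the language $\mathscr{U}=\{\dot d_q,\dot d^q:q\in\mathbb{Q}^+\}$ with $\dot d_q(x,y)\Leftrightarrow d(x,y)<q$ and $\dot d^q(x,y)\Leftrightarrow d(x,y)>q$. Back-and-forth relations on equal-length tuples: $\bar a\sim_0\bar b$ iff $a_i\mapsto b_i$ is a partial $\mathscr{U}$-isomorphism (i.e. a partial isometry); $\bar a\sim_{\alpha+1}\bar b$ iff for every $a\in M$ there is $b\in M$ with $\bar a a\sim_\alpha\bar b b$ and for every $b\in M$ there is $a\in M$ with $\bar a a\sim_\alpha\bar b b$; at limits $\beta$, $\sim_\beta$ is the intersection of $\sim_\alpha$, $\alpha<\beta$. $\mathrm{SR}(\bar a,\bar b)$ is the least $\mu$ with $\neg(\bar a\sim_\mu\bar b)$ (or $\infty$). A compact approximation system for $M,\bar a,\bar b$ with respect to $(A_n)$ is a sequence $(\varphi_n:n\in\omega)$ such that for every $n$: (i) $\varphi_n:A_n\to A_n$; (ii) for all $i<p$ and $z\in A_n$,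 $|d(a_i,z)-d(b_i,\varphi_n(z))|<2^{-n}$; (iii) for all $m\le n$, $y\in A_m$, $z\in A_n$, $|d(y,z)-d(\varphi_m(y),\varphi_n(z))|<2^{-m}+2^{-n}$; (iv) $\bigcup_{z\in A_n}B_{2^{-(n-1)}}(\varphi_n(z))=M$. *)

(* Defs.v *)
From Stdlib Require Import Reals QArith List.
Open Scope R_scope.

Record is_metric (M : Type) (d : M -> M -> R) : Prop := {
  met_nonneg : forall x y, 0 <= d x y;
  met_zero   : forall x y, d x y = 0 <-> x = y;
  met_sym    : forall x y, d x y = d y x;
  met_tri    : forall x y z, d x z <= d x y + d y z }.

Definition ball {M : Type} (d : M -> M -> R) (z : M) (r : R) : M -> Prop :=
  fun x => d z x < r.

Definition is_open {M : Type} (d : M -> M -> R) (U : M -> Prop) : Prop :=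
  forall x, U x -> exists r, 0 < r /\ forall y, ball d x r y -> U y.

Definition is_compact {M : Type} (d : M -> M -> R) : Prop :=
  forall (I : Type) (U : I -> M -> Prop),
    (forall i, is_open d (U i)) -> (forall x, exists i, U i x) ->
    exists l : list I, forall x, exists i, In i l /\ U i x.

Definition cauchy_seq {M : Type} (d : M -> M -> R) (u : nat -> M) : Prop :=
  forall eps, 0 < eps -> exists N, forall m n, (N <= m)%nat -> (N <= n)%nat ->
    d (u m) (u n) < eps.

Definition converges_to {M : Type} (d : M -> M -> R) (u : nat -> M) (x : M) : Prop :=
  forall eps, 0 < eps -> exists N, forall n, (N <= n)%nat -> d (u n) x < eps.

Definition is_complete {M : Type} (d : M -> M -> R) : Prop :=
  forall u, cauchy_seq d u -> exists x, converges_to d u x.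

(* Separable: there is a countable dense subset (enumerated, possibly empty). *)
Definition is_separable {M : Type} (d : M -> M -> R) : Prop :=
  exists e : nat -> option M, forall x eps, 0 < eps ->
    exists n y, e n = Some y /\ d x y < eps.

Definition is_polish {M : Type} (d : M -> M -> R) : Prop :=
  is_metric M d /\ is_complete d /\ is_separable d.

(* ~_0 : the map a_i |-> b_i is a partial isomorphism for the language
   {=} U {d_q, d^q : q in Q+}, with d_q(x,y) <-> d(x,y) < q and
   d^q(x,y) <-> d(x,y) > q. Tuples are lists. *)
Definition sim0 {M : Type} (d : M -> M -> R) (a b : list M) : Prop :=
  length a = length b /\
  forall i j, (i < length a)%nat -> (j < length a)%nat ->
    forall x0 : M,
    (nth i a x0 = nth j a x0 <-> nth i b x0 = nth j b x0) /\
    forall q : Q, (0 < q)%Q ->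
      (d (nth i a x0) (nth j a x0) < Q2R q <-> d (nth i b x0) (nth j b x0) < Q2R q) /\
      (d (nth i a x0) (nth j a x0) > Q2R q <-> d (nth i b x0) (nth j b x0) > Q2R q).

Fixpoint sim {M : Type} (d : M -> M -> R) (n : nat) (a b : list M) : Prop :=
  match n with
  | O => sim0 d a b
  | S k => (forall x, exists y, sim d k (a ++ x :: nil) (b ++ y :: nil)) /\
           (forall y, exists x, sim d k (a ++ x :: nil) (b ++ y :: nil))
  end.

(* SR(a,b) > omega  <->  a ~_mu b for all mu <= omega  <-> a ~_n b for all n. *)
Definition SR_gt_omega {M : Type} (d : M -> M -> R) (a b : list M) : Prop :=
  forall n, sim d n a b.

(* Compact approximation system for M, a, b w.r.t. (A_n). phi n is a map on M
   whose restriction to A_n is the map phi_n : A_n -> A_n. *)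
Definition compact_approx_system {M : Type} (d : M -> M -> R) (a b : list M)
  (A : nat -> list M) (phi : nat -> M -> M) : Prop :=
  forall n : nat,
    (forall z, In z (A n) -> In (phi n z) (A n)) /\
    (forall i, (i < length a)%nat -> forall x0 : M, forall z, In z (A n) ->
       Rabs (d (nth i a x0) z - d (nth i b x0) (phi n z)) < / 2 ^ n) /\
    (forall m, (m <= n)%nat -> forall y z, In y (A m) -> In z (A n) ->
       Rabs (d y z - d (phi m y) (phi n z)) < / 2 ^ m + / 2 ^ n) /\
    (forall x : M, exists z, In z (A n) /\ ball d (phi n z) (2 * / 2 ^ n) x).

(* Main.v *)
Require Import Defs.
From Stdlib Require Import Reals QArith List Lra Lia ZArith Qreals Classical ClassicalEpsilon.
Open Scope R_scope.

Lemma Q_between (r1 r2 : R) : 0 <= r1 -> r1 < r2 ->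
  exists q : Q, (0 < q)%Q /\ r1 < Q2R q < r2.
Proof.
  intros H0 H12.
  destruct (archimed_cor1 (r2 - r1)) as [N [HN HN0]]; [lra|].
  assert (HNR : 0 < INR N) by (apply lt_0_INR; exact HN0).
  destruct (archimed (r1 * INR N)) as [Hz1 Hz2].
  set (z := up (r1 * INR N)) in *.
  assert (HP : Z.pos (Pos.of_nat N) = Z.of_nat N).
  { rewrite <- (Nat2Pos.id N) at 2 by lia. rewrite positive_nat_Z; reflexivity. }
  assert (HQ : Q2R (Qmake z (Pos.of_nat N)) = IZR z / INR N).
  { unfold Q2R; simpl. rewrite HP, <- INR_IZR_INZ. reflexivity. }
  assert (r1 < IZR z / INR N).
  { apply (Rmult_lt_reg_r (INR N)); auto. unfold Rdiv. rewrite Rmult_assoc, Rinv_l; lra. }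
  assert (IZR z / INR N <= r1 + / INR N).
  { apply (Rmult_le_reg_r (INR N)); auto. unfold Rdiv. rewrite Rmult_assoc, Rinv_l by lra.
    rewrite Rmult_plus_distr_r, Rinv_l by lra. lra. }
  exists (Qmake z (Pos.of_nat N)). split.
  - apply Rlt_Qlt. rewrite HQ. unfold Q2R; simpl. lra.
  - rewrite HQ. lra.
Qed.

Lemma sim0_dist {M} (d : M -> M -> R) (Hm : is_metric M d) a b :
  sim0 d a b -> forall i j x0, (i < length a)%nat -> (j < length a)%nat ->
  d (nth i a x0) (nth j a x0) = d (nth i b x0) (nth j b x0).
Proof.
  intros [Hl H] i j x0 Hi Hj.
  destruct (H i j Hi Hj x0) as [_ Hq].
  pose proof (met_nonneg _ _ Hm (nth i a x0) (nth j a x0)).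
  pose proof (met_nonneg _ _ Hm (nth i b x0) (nth j b x0)).
  destruct (Rtotal_order (d (nth i a x0) (nth j a x0)) (d (nth i b x0) (nth j b x0))) as [Hlt|[Heq|Hgt]]; auto.
  - destruct (Q_between _ _ H0 Hlt) as [q [Hq0 [Hq1 Hq2]]].
    destruct (Hq q Hq0) as [[Hx _] _]. specialize (Hx Hq1). lra.
  - destruct (Q_between _ _ H1 Hgt) as [q [Hq0 [Hq1 Hq2]]].
    destruct (Hq q Hq0) as [[_ H2] _]. specialize (H2 Hq1). lra.
Qed.

Lemma forth {M} (d : M -> M -> R) : forall D k a b, sim d (length D + k) a b ->
  exists y, length y = length D /\ sim d k (a ++ D) (b ++ y).
Proof.
  induction D as [|x D IH]; intros k a b H.
  - exists nil. rewrite !app_nil_r. auto.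
  - simpl in H. destruct H as [Hf _]. destruct (Hf x) as [y0 Hy0].
    destruct (IH k _ _ Hy0) as [y [Hl Hs]].
    exists (y0 :: y). split; [simpl; lia|].
    rewrite <- !app_assoc in Hs. exact Hs.
Qed.

Lemma back {M} (d : M -> M -> R) : forall W k a b, sim d (length W + k) a b ->
  exists u, length u = length W /\ sim d k (a ++ u) (b ++ W).
Proof.
  induction W as [|x W IH]; intros k a b H.
  - exists nil. rewrite !app_nil_r. auto.
  - simpl in H. destruct H as [_ Hb]. destruct (Hb x) as [y0 Hy0].
    destruct (IH k _ _ Hy0) as [y [Hl Hs]].
    exists (y0 :: y). split; [simpl; lia|].
    rewrite <- !app_assoc in Hs. exact Hs.
Qed.

Definition pos {M} (z : M) (l : list M) : nat :=
  match excluded_middle_informative (exists k, (k < length l)%nat /\ nth k l z = z) with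
  | left H => proj1_sig (constructive_indefinite_description _ H)
  | right _ => O end.

Lemma pos_spec {M} (z : M) l : In z l ->
  (pos z l < length l)%nat /\ forall x0, nth (pos z l) l x0 = z.
Proof.
  intro Hin. unfold pos. destruct excluded_middle_informative as [H|H].
  - destruct constructive_indefinite_description as [k [Hk Hn]]. simpl. split; auto.
    intro x0. rewrite (nth_indep l x0 z Hk). auto.
  - exfalso. apply H. destruct (In_nth l z z Hin) as [k [Hk Hn]]. eauto.
Qed.

Lemma nth3_1 {X} (l1 l2 l3 : list X) i x0 : (i < length l1)%nat ->
  nth i ((l1++l2)++l3) x0 = nth i l1 x0.
Proof. intro H. rewrite app_nth1, app_nth1; auto. rewrite length_app; lia. Qed.

Lemma nth3_2 {X} (l1 l2 l3 : list X) k x0 : (k < length l2)%nat ->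
  nth (length l1 + k) ((l1++l2)++l3) x0 = nth k l2 x0.
Proof.
  intro H. rewrite app_nth1 by (rewrite length_app; lia).
  rewrite app_nth2 by lia. f_equal; lia.
Qed.

Lemma nth3_3 {X} (l1 l2 l3 : list X) k x0 :
  nth (length l1 + length l2 + k) ((l1++l2)++l3) x0 = nth k l3 x0.
Proof.
  rewrite app_nth2 by (rewrite length_app; lia). rewrite length_app. f_equal; lia.
Qed.

Lemma maxlist_ge : forall l k, In k l -> (k <= fold_right Nat.max O l)%nat.
Proof. induction l; simpl; intros k Hk; [destruct Hk|]. destruct Hk as [->|H]; [lia|]. specialize (IHl k H). lia. Qed.

Lemma slack1 {M} (d : M -> M -> R) (Hm : is_metric M d) (Hc : is_compact d) (A : nat -> list M)
  (Hcover : forall n (x : M), exists z, In z (A n) /\ ball d z (/ 2 ^ n) x) n :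
  exists eps, 0 < eps /\ forall x, exists z, In z (A n) /\ d z x < / 2 ^ n - eps.
Proof.
  set (U := fun (k : nat) (x : M) => exists z, In z (A n) /\ d z x < / 2 ^ n - / INR (S k)).
  destruct (Hc nat U) as [l Hl].
  - intros k x [z [Hz Hd]]. exists (/ 2 ^ n - / INR (S k) - d z x). split; [lra|].
    intros y Hy. unfold ball in Hy. exists z. split; auto.
    pose proof (met_tri _ _ Hm z x y). lra.
  - intro x. destruct (Hcover n x) as [z [Hz Hd]]. unfold ball in Hd.
    destruct (archimed_cor1 (/ 2 ^ n - d z x)) as [K [HK HK0]]; [lra|].
    exists (pred K). exists z. split; auto. replace (S (pred K)) with K by lia. lra.
  - set (K := fold_right Nat.max O l).
    exists (/ INR (S K)). split. { apply Rinv_0_lt_compat, lt_0_INR; lia. }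
    intro x. destruct (Hl x) as [k [Hk [z [Hz Hd]]]]. exists z. split; auto.
    assert (k <= K)%nat by (apply maxlist_ge; auto).
    assert (/ INR (S K) <= / INR (S k)).
    { apply Rinv_le_contravar. apply lt_0_INR; lia. apply le_INR; lia. }
    lra.
Qed.

Lemma slackN {M} (d : M -> M -> R) (Hm : is_metric M d) (Hc : is_compact d) (A : nat -> list M)
  (Hcover : forall n (x : M), exists z, In z (A n) /\ ball d z (/ 2 ^ n) x) N :
  exists eps, 0 < eps /\ forall n, (n <= N)%nat -> forall x, exists z, In z (A n) /\ d z x < / 2 ^ n - eps.
Proof.
  induction N as [|N [e1 [He1 H1]]].
  - destruct (slack1 d Hm Hc A Hcover 0) as [e [He H]]. exists e. split; auto.
    intros n Hn. replace n with O by lia. auto.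
  - destruct (slack1 d Hm Hc A Hcover (S N)) as [e2 [He2 H2]].
    exists (Rmin e1 e2). split. { apply Rmin_glb_lt; auto. }
    intros n Hn x. destruct (Nat.eq_dec n (S N)) as [->|Hne].
    + destruct (H2 x) as [z [Hz Hd]]. exists z. split; auto. pose proof (Rmin_r e1 e2). lra.
    + destruct (H1 n ltac:(lia) x) as [z [Hz Hd]]. exists z. split; auto. pose proof (Rmin_l e1 e2). lra.
Qed.

Lemma one_le_pow2 : forall k, 1 <= 2 ^ k.
Proof. induction k; simpl; lra. Qed.

Lemma INR_le_pow2 : forall k, INR k <= 2 ^ k.
Proof. induction k. simpl; lra. rewrite S_INR. simpl. pose proof (one_le_pow2 k). lra. Qed.

Lemma pow2_big eps : 0 < eps -> exists J, / 2 ^ J < eps.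
Proof.
  intro He. destruct (archimed_cor1 eps He) as [K [HK HK0]]. exists K.
  assert (/ 2 ^ K <= / INR K). { apply Rinv_le_contravar. apply lt_0_INR; lia. apply INR_le_pow2. }
  lra.
Qed.

Lemma incl_mono {M} (A : nat -> list M) (Hmono : forall n, incl (A n) (A (S n))) :
  forall n N, (n <= N)%nat -> incl (A n) (A N).
Proof. intros n N H. induction H; [apply incl_refl | eapply incl_tran; eauto]. Qed.

Definition cond {M} (d : M -> M -> R) (a b : list M) (A : nat -> list M)
  (phi : nat -> M -> M) (n : nat) : Prop :=
    (forall z, In z (A n) -> In (phi n z) (A n)) /\
    (forall i, (i < length a)%nat -> forall x0 : M, forall z, In z (A n) ->
       Rabs (d (nth i a x0) z - d (nth i b x0) (phi n z)) < / 2 ^ n) /\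
    (forall m, (m <= n)%nat -> forall y z, In y (A m) -> In z (A n) ->
       Rabs (d y z - d (phi m y) (phi n z)) < / 2 ^ m + / 2 ^ n) /\
    (forall x : M, exists z, In z (A n) /\ ball d (phi n z) (2 * / 2 ^ n) x).

Lemma cond_ext {M} (d : M -> M -> R) a b A phi psi n :
  (forall m z, (m <= n)%nat -> In z (A m) -> psi m z = phi m z) ->
  cond d a b A phi n -> cond d a b A psi n.
Proof.
  intros He [H1 [H2 [H3 H4]]]. split; [|split; [|split]].
  - intros z Hz. rewrite He; auto.
  - intros i Hi x0 z Hz. rewrite He; auto.
  - intros m Hmn y z Hy Hz. rewrite (He m y), (He n z); auto.
  - intro x. destruct (H4 x) as [z [Hz Hb]]. exists z. rewrite He; auto.
Qed.

Lemma list_bound {T} (P : T -> nat -> Prop) (l : list T) :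
  (forall c N N', (N <= N')%nat -> P c N -> P c N') ->
  (forall c, In c l -> exists N, P c N) -> exists N, forall c, In c l -> P c N.
Proof.
  intros Hmon. induction l as [|c l IH]; intros H.
  - exists O. intros c [].
  - destruct (H c (or_introl eq_refl)) as [N1 H1].
    destruct IH as [N2 H2]. { intros c' Hc'. apply H. right; auto. }
    exists (Nat.max N1 N2). intros c' [<-|Hc'].
    + apply (Hmon _ N1); [lia|auto].
    + apply (Hmon _ N2); [lia|auto].
Qed.

Definition upd {T} (t : nat -> T) (n : nat) (c : T) : nat -> T :=
  fun k => if Nat.eq_dec k n then c else t k.

Fixpoint build {T} (P : nat -> (nat -> T) -> Prop)
  (st : forall n t, P n t -> {c | P (S n) (upd t n c)}) (t0 : nat -> T) (H0 : P O t0)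
  (n : nat) : {t | P n t} :=
  match n return {t | P n t} with
  | O => exist _ t0 H0
  | S n' => let bt := build P st t0 H0 n' in
      exist _ (upd (proj1_sig bt) n' (proj1_sig (st n' _ (proj2_sig bt))))
              (proj2_sig (st n' _ (proj2_sig bt)))
  end.

Lemma build_coh {T} P st (t0 : nat -> T) H0 : forall n m k, (k < n)%nat ->
  proj1_sig (build P st t0 H0 (n + m)) k = proj1_sig (build P st t0 H0 n) k.
Proof.
  intros n m k Hk. induction m.
  - rewrite Nat.add_0_r. reflexivity.
  - rewrite Nat.add_succ_r. simpl. unfold upd at 1.
    destruct (Nat.eq_dec k (n + m)); [lia|]. exact IHm.
Qed.

Lemma konig {T} (R : nat -> (nat -> T) -> Prop) (F : nat -> list T)
 (Hloc : forall n s t, (forall k, (k <= n)%nat -> s k = t k) -> R n s -> R n t)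
 (HF : forall N s n, (n <= N)%nat -> (forall k, (k<=N)%nat -> R k s) -> In (s n) (F n))
 (Hfin : forall N, exists s, forall k, (k <= N)%nat -> R k s) (t0 : nat -> T) :
 exists s, forall n, R n s.
Proof.
  set (good := fun n (t : nat -> T) => forall N, exists s,
        (forall k, (k < n)%nat -> s k = t k) /\ forall k, (k <= N)%nat -> R k s).
  assert (Hstep : forall n t, good n t -> exists c, good (S n) (upd t n c)).
  { intros n t Hg. apply NNPP. intro Hno.
    assert (Hb : forall c, In c (F n) -> exists N, forall s,
      (forall k, (k < S n)%nat -> s k = upd t n c k) -> ~ (forall k, (k <= N)%nat -> R k s)).
    { intros c _. apply NNPP. intro H1. apply Hno. exists c. intro N.
      apply NNPP. intro H2. apply H1. exists N. intros s Hs Hr. apply H2. exists s. auto. }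
    destruct (list_bound (fun c N => forall s,
      (forall k, (k < S n)%nat -> s k = upd t n c k) -> ~ (forall k, (k <= N)%nat -> R k s))
      (F n)) as [N0 HN0].
    { intros c N N' HNN' HP s Hs Hr. apply (HP s Hs). intros k Hk. apply Hr. lia. }
    { exact Hb. }
    destruct (Hg (Nat.max N0 n)) as [s [Hs Hr]].
    assert (Hin : In (s n) (F n)) by (apply (HF (Nat.max N0 n)); [lia|auto]).
    apply (HN0 _ Hin s).
    - intros k Hk. unfold upd. destruct (Nat.eq_dec k n); [subst; auto | apply Hs; lia].
    - intros k Hk. apply Hr. lia. }
  assert (Hstep' : forall n t, good n t -> {c | good (S n) (upd t n c)}).
  { intros n t H. apply constructive_indefinite_description. auto. }
  assert (H0 : good O t0).
  { intro N. destruct (Hfin N) as [s Hs]. exists s. split; auto. intros; lia. }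
  exists (fun k => proj1_sig (build good Hstep' t0 H0 (S k)) k).
  intro n. destruct (proj2_sig (build good Hstep' t0 H0 (S n)) n) as [s' [Hs' Hr']].
  apply (Hloc n s'); [|apply Hr'; lia].
  intros k Hk. rewrite Hs' by lia.
  replace (S n) with (S k + (n - k))%nat by lia.
  apply build_coh. lia.
Qed.

Lemma finite_sol (M : Type) (d : M -> M -> R) (Hm : is_metric M d) (Hcompact : is_compact d)
  (p : nat) (a b : list M) (Ha : length a = p) (Hb : length b = p)
  (A : nat -> list M)
  (Hmono : forall n, incl (A n) (A (S n)))
  (Hcover : forall n (x : M), exists z, In z (A n) /\ ball d z (/ 2 ^ n) x)
  (HSR : SR_gt_omega d a b) N :
  exists phi, forall n, (n <= N)%nat -> cond d a b A phi n.
Proof.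
  destruct (slackN d Hm Hcompact A Hcover N) as [eps [Heps Hsl]].
  destruct (pow2_big eps Heps) as [J HJ].
  set (W := A J). set (D := A N).
  destruct (back d W (length D + 0) a b (HSR _)) as [u [Hul Hs1]].
  destruct (forth d D 0 _ _ Hs1) as [y [Hyl Hs0]].
  simpl in Hs0.
  pose proof (sim0_dist d Hm _ _ Hs0) as Hd.
  assert (Hla : length ((a ++ u) ++ D) = (p + length W + length D)%nat)
    by (rewrite !length_app; lia).
  set (g := fun z => nth (pos z D) y z).
  set (uw := fun w => nth (pos w W) u w).
  assert (KF1 : forall i z x0, (i < p)%nat -> In z D ->
     d (nth i a x0) z = d (nth i b x0) (g z)).
  { intros i z x0 Hi Hz. destruct (pos_spec z D Hz) as [Hp Hn].
    specialize (Hd i (p + length W + pos z D)%nat x0 ltac:(lia) ltac:(lia)).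
    rewrite (nth3_1 a u D i x0) in Hd by lia. rewrite (nth3_1 b W y i x0) in Hd by lia.
    pose proof (nth3_3 a u D (pos z D) x0) as E1. rewrite Ha, Hul in E1.
    pose proof (nth3_3 b W y (pos z D) x0) as E2. rewrite Hb in E2.
    rewrite E1, E2, Hn in Hd. rewrite Hd. unfold g.
    rewrite (nth_indep y x0 z) by lia. reflexivity. }
  assert (KF2 : forall z z', In z D -> In z' D -> d z z' = d (g z) (g z')).
  { intros z z' Hz Hz'. destruct (pos_spec z D Hz) as [Hp Hn].
    destruct (pos_spec z' D Hz') as [Hp' Hn'].
    specialize (Hd (p + length W + pos z D)%nat (p + length W + pos z' D)%nat z ltac:(lia) ltac:(lia)).
    pose proof (nth3_3 a u D (pos z D) z) as E1. rewrite Ha, Hul in E1.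
    pose proof (nth3_3 b W y (pos z D) z) as E2. rewrite Hb in E2.
    pose proof (nth3_3 a u D (pos z' D) z) as E3. rewrite Ha, Hul in E3.
    pose proof (nth3_3 b W y (pos z' D) z) as E4. rewrite Hb in E4.
    rewrite E1, E2, E3, E4, Hn, Hn' in Hd. rewrite Hd. unfold g.
    f_equal; apply nth_indep; lia. }
  assert (KF3 : forall w z, In w W -> In z D -> d (uw w) z = d w (g z)).
  { intros w z Hw Hz. destruct (pos_spec z D Hz) as [Hp Hn].
    destruct (pos_spec w W Hw) as [Hpw Hnw].
    specialize (Hd (p + pos w W)%nat (p + length W + pos z D)%nat z ltac:(lia) ltac:(lia)).
    pose proof (nth3_3 a u D (pos z D) z) as E1. rewrite Ha, Hul in E1.
    pose proof (nth3_3 b W y (pos z D) z) as E2. rewrite Hb in E2.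
    pose proof (nth3_2 a u D (pos w W) z ltac:(lia)) as E3. rewrite Ha in E3.
    pose proof (nth3_2 b W y (pos w W) z ltac:(lia)) as E4. rewrite Hb in E4.
    rewrite E1, E2, E3, E4, Hn, Hnw in Hd. unfold uw, g.
    replace (nth (pos w W) u w) with (nth (pos w W) u z) by (apply nth_indep; lia). exact Hd. }
  exists (fun n z => proj1_sig (constructive_indefinite_description _ (Hcover n (g z)))).
  intros n Hn.
  assert (HP : forall m z, In (proj1_sig (constructive_indefinite_description _ (Hcover m (g z)))) (A m)
      /\ d (proj1_sig (constructive_indefinite_description _ (Hcover m (g z)))) (g z) < / 2 ^ m).
  { intros m z. destruct constructive_indefinite_description as [c [Hc1 Hc2]]. simpl. auto. }
  assert (HD : forall m, (m <= N)%nat -> incl (A m) D) by (intros; apply incl_mono; auto).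
  pose proof (met_tri _ _ Hm) as Tri. pose proof (met_sym _ _ Hm) as Sym.
  split; [|split; [|split]].
  - intros z Hz. apply HP.
  - intros i Hi x0 z Hz. rewrite (KF1 i z x0); [|lia|apply (HD n Hn); auto].
    set (c := proj1_sig _). destruct (HP n z) as [_ Hc]. fold c in Hc.
    pose proof (Tri (nth i b x0) c (g z)). pose proof (Tri (nth i b x0) (g z) c).
    rewrite (Sym (g z) c) in *. apply Rabs_def1; lra.
  - intros m Hmn y0 z Hy Hz. rewrite (KF2 y0 z); [|apply (HD m); auto; lia|apply (HD n); auto].
    destruct (HP m y0) as [_ H1]. destruct (HP n z) as [_ H2].
    set (c1 := proj1_sig (constructive_indefinite_description _ (Hcover m (g y0)))) in *.
    set (c2 := proj1_sig (constructive_indefinite_description _ (Hcover n (g z)))) in *.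
    pose proof (Tri (g y0) c1 (g z)). pose proof (Tri c1 c2 (g z)).
    pose proof (Tri c1 (g y0) c2). pose proof (Tri (g y0) (g z) c2).
    pose proof (Sym (g y0) c1). pose proof (Sym (g z) c2).
    apply Rabs_def1; lra.
  - intro x. destruct (Hcover J x) as [w [Hw Hwx]]. unfold ball in Hwx.
    destruct (Hsl n Hn (uw w)) as [z [Hz Hzu]].
    exists z. split; [exact Hz|]. unfold ball.
    destruct (HP n z) as [_ H1].
    set (c := proj1_sig (constructive_indefinite_description _ (Hcover n (g z)))) in *.
    assert (E : d (g z) w = d z (uw w)).
    { rewrite Sym, (Sym z), KF3; auto. apply (HD n); auto. }
    pose proof (Tri c (g z) x). pose proof (Tri (g z) w x).
    assert (/ 2 ^ J <= eps) by lra. change (d c x < 2 * / 2 ^ n). lra.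
Qed.

Fixpoint lists_from {X} (l : list X) (L : nat) : list (list X) :=
  match L with
  | O => nil :: nil
  | S L' => flat_map (fun x => map (cons x) (lists_from l L')) l
  end.

Lemma lists_from_spec {X} (l : list X) : forall L v, length v = L ->
  (forall x, In x v -> In x l) -> In v (lists_from l L).
Proof.
  induction L; destruct v as [|x v]; simpl; intros Hl Hin; try discriminate.
  - left; auto.
  - apply in_flat_map. exists x. split; [apply Hin; left; auto|].
    apply in_map. apply IHL; auto.
Qed.

Theorem lemma3p3 (M : Type) (d : M -> M -> R)
  (Hpolish : is_polish d) (Hcompact : is_compact d)
  (p : nat) (a b : list M) (Ha : length a = p) (Hb : length b = p)
  (A : nat -> list M)
  (Hmono : forall n, incl (A n) (A (S n)))
  (Hcover : forall n (x : M), exists z, In z (A n) /\ ball d z (/ 2 ^ n) x)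
  (HSR : SR_gt_omega d a b) :
  exists phi : nat -> M -> M, compact_approx_system d a b A phi.
Proof.
  destruct Hpolish as [Hm _].
  set (rep := fun (s : nat -> list M) m z => nth (pos z (A m)) (s m) z).
  set (Rn := fun n (s : nat -> list M) =>
     (length (s n) = length (A n) /\ forall x, In x (s n) -> In x (A n)) /\
     cond d a b A (rep s) n).
  destruct (konig Rn (fun n => lists_from (A n) (length (A n)))) as [s Hs].
  - intros n s t Hst [[Hl Hin] Hc]. split.
    + rewrite <- Hst by lia. split; auto.
    + apply (cond_ext d a b A (rep s)); auto.
      intros m z Hm' Hz. unfold rep. rewrite Hst by lia. reflexivity.
  - intros N s n Hn Hr. destruct (Hr n Hn) as [[Hl Hin] _].
    apply lists_from_spec; auto.
  - intro N. destruct (finite_sol M d Hm Hcompact p a b Ha Hb A Hmono Hcover HSR N) as [phi Hphi].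
    exists (fun n => map (phi n) (A n)). intros k Hk. split.
    + split; [apply length_map|]. intros x Hx. apply in_map_iff in Hx.
      destruct Hx as [z [<- Hz]]. apply (Hphi k Hk); auto.
    + apply (cond_ext d a b A phi); [|apply Hphi; auto].
      intros m z _ Hz. unfold rep. destruct (pos_spec z (A m) Hz) as [Hp Hn].
      rewrite (nth_indep _ z (phi m z)) by (rewrite length_map; auto).
      rewrite map_nth. rewrite Hn. reflexivity.
  - exact (fun _ => nil).
  - exists (rep s). intro n. apply (Hs n).
Qed.
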